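(* Let $\ell_1,\ell_2,\dots\in\mathbb R^A$ be arbitrary non-negative loss vectors, and let $\pi_1,\pi_2,\dots$ be the FTRL iterates defined in the context. Suppose $0<\alpha_1\le1$, $\eta_1=\eta_2(1-\alpha_1)$, and for all $k\ge2$, $0<\alpha_k<1$ and $0<\eta_{k+1}(1-\alpha_k)\le\eta_k$. Define $\widehat\eta_1=\eta_2$ and $\widehat\eta_k=\eta_k/(1-\alpha_k)$ for $k>1$. Then for every $n\ge1$, $$R_n\le\frac53\sum_{k=1}^n\alpha_k^n\widehat\eta_k\alpha_k\mathsf{Var}_{\pi_k}(\ell_k)+\frac{\log A}{\eta_{n+1}}+3\sum_{k=1}^n\alpha_k^n\widehat\eta_k^2\alpha_k^2\|\ell_k\|_\infty^3\,\mathbb 1\Big(\widehat\eta_k\alpha_k\|\ell_k\|_\infty>\tfrac13\Big).$$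
   Context: Online weighted linear optimization over $\mathcal A=\{1,\dots,A\}$: given $\{\alpha_k\}\subset(0,1]$, let $\alpha_i^k=\alpha_i\prod_{j=i+1}^k(1-\alpha_j)$ for $i<k$, $\alpha_k^k=\alpha_k$. Define $L_0=0$ and $L_k=(1-\alpha_k)L_{k-1}+\alpha_k\ell_k=\sum_{i=1}^k\alpha_i^k\ell_i$. FTRL with negative-entropy regularizer and learning rates $\eta_k>0$: $\pi_k(a)=\exp(-\eta_kL_{k-1}(a))/\sum_{a'}\exp(-\eta_kL_{k-1}(a'))$ for $k\ge1$ (equivalently $\pi_{k}=\arg\min_{\pi\in\Delta(\mathcal A)}\{\langle\pi,L_{k-1}\rangle+\eta_k^{-1}\sum_a\pi(a)\log\pi(a)\}$; $\pi_1$ is uniform). Regret: $R_n=\max_{a\in\mathcal A}\big\{\sum_{k=1}^n\alpha_k^n\langle\pi_k,\ell_k\rangle-\sum_{k=1}^n\alpha_k^n\ell_k(a)\big\}$. For $\pi\in\Delta(\mathcal A)$, $\mathbb E_\pi[\ell]=\sum_a\pi(a)\ell(a)$ and $\mathsf{Var}_\pi(\ell)=\sum_a\pi(a)(\ell(a)-\mathbb E_\pi[\ell])^2$. *)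

(* Defs.v *)
From HB Require Import structures.
From mathcomp Require Import all_boot all_order all_algebra.
From mathcomp Require Import all_classical all_reals all_analysis.
Set Implicit Arguments. Unset Strict Implicit. Unset Printing Implicit Defensive.
Import Order.TTheory GRing.Theory Num.Theory.
Local Open Scope ring_scope.

Section FTRL.
Variable R : realType.
Variable A : nat.
Variable alpha : nat -> R.           (* alpha k, k >= 1 (index 0 unused) *)
Variable eta : nat -> R.
Variable loss : nat -> 'I_A -> R.

(* alpha_i^k = alpha_i * prod_{j=i+1}^k (1 - alpha_j) *)
Definition wgt (i k : nat) : R := alpha i * \prod_(i.+1 <= j < k.+1) (1 - alpha j).

Fixpoint cumL (k : nat) (a : 'I_A) : R :=
  match k with
  | 0 => 0
  | k'.+1 => (1 - alpha k'.+1) * cumL k' a + alpha k'.+1 * loss k'.+1 a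
  end.

Definition ftrl (k : nat) (a : 'I_A) : R :=
  expR (- eta k * cumL k.-1 a) / \sum_(b < A) expR (- eta k * cumL k.-1 b).

Definition expectpi (p l : 'I_A -> R) : R := \sum_(a < A) p a * l a.
Definition varpi (p l : 'I_A -> R) : R :=
  \sum_(a < A) p a * (l a - expectpi p l) ^+ 2.
Definition supnorm (l : 'I_A -> R) : R := \big[Num.max/0]_(a < A) `|l a|.

Definition regret_vs (n : nat) (a : 'I_A) : R :=
  \sum_(1 <= k < n.+1) wgt k n * expectpi (ftrl k) (loss k)
  - \sum_(1 <= k < n.+1) wgt k n * loss k a.

(* R_n = max_a regret_vs n a; hA : 0 < A provides a seed element *)
Definition regret (hA : (0 < A)%N) (n : nat) : R :=
  \big[Num.max/regret_vs n (Ordinal hA)]_(a < A) regret_vs n a.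

Definition etahat (k : nat) : R :=
  if k == 1%N then eta 2 else eta k / (1 - alpha k).

Definition ind01 (b : bool) : R := if b then 1 else 0.

End FTRL.

(* Main.v *)
Require Import Defs.
From HB Require Import structures.
From mathcomp Require Import all_boot all_order all_algebra.
From mathcomp Require Import all_classical all_reals all_analysis.
From mathcomp Require Import ring lra.
Import Order.TTheory GRing.Theory Num.Theory.
Local Open Scope ring_scope.
Section Aux.
Variable R : realType.

Lemma expR_conv (p z : R) : 0 <= p -> p <= 1 ->
  expR (p * z) <= p * expR z + (1 - p).
Proof.
move=> p0 p1.
have := convex_expR (Itv01 p0 p1) z 0.
by rewrite !convRE /= expR0 !mulr0 addr0 mulr1.
Qed.

Lemma ln_le_sub1 (t : R) : 0 < t -> ln t <= t - 1.
Proof.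
move=> t0; have := expR_ge1Dx (ln t); rewrite lnK ?posrE //; lra.
Qed.

Lemma expN_pos (y : R) : 0 <= y -> expR (- y) <= 1 - y + y ^+ 2.
Proof.
move=> y0.
have e2 : expR y = expR (y / 2) ^+ 2 by rewrite -expRM_natr; congr expR; field.
have h1 : 1 + y / 2 <= expR (y / 2) by exact: expR_ge1Dx.
have h2 : (1 + y / 2) ^+ 2 <= expR y.
  rewrite e2 lerXn2r // ?nnegrE; lra.
have pos : 0 < expR y by exact: expR_gt0.
rewrite expRN -[_^-1]mul1r ler_pdivrMr //.
have q : 0 < 1 - y + y ^+ 2 by nra.
have : (1 - y + y ^+ 2) * (1 + y / 2) ^+ 2 <= (1 - y + y ^+ 2) * expR y.
  by rewrite ler_pM2l.
nra.
Qed.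

Lemma expN_small (y : R) : - (1/3) <= y -> expR (- y) <= 1 - y + 5/3 * y ^+ 2.
Proof.
move=> yl; case: (lerP 0 y) => y0.
  have := expN_pos y y0; nra.
set u := - y.
have u0 : 0 < u by rewrite /u; lra.
have u3 : u <= 1/3 by rewrite /u; lra.
have h1 : 1 - u <= expR (- u) by have := expR_ge1Dx (- u); lra.
have e1 : expR u * expR (- u) = 1 by exact: expRxMexpNx_1.
have pos : 0 < expR u by exact: expR_gt0.
have h2 : expR u * (1 - u) <= expR u * expR (- u) by rewrite ler_pM2l.
rewrite e1 in h2.
have c1 : 1 <= (1 + u + 5/3 * u ^+ 2) * (1 - u) by nra.
have -> : 1 - y + 5 / 3 * y ^+ 2 = 1 + u + 5/3 * u ^+ 2 by rewrite /u; ring.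
nra.
Qed.

Variable A : nat.

Lemma sum_pi_affine (p y : 'I_A -> R) (c0 c1 c2 : R) :
  \sum_(b < A) p b * (c0 + c1 * y b + c2 * y b ^+ 2) =
  c0 * \sum_(b < A) p b + c1 * \sum_(b < A) p b * y b + c2 * \sum_(b < A) p b * y b ^+ 2.
Proof.
rewrite !mulr_sumr -!big_split /=; apply: eq_bigr => b _; ring.
Qed.

Lemma fbound (p x : 'I_A -> R) (M : R) :
  (forall b, 0 <= p b) -> \sum_(b < A) p b = 1 -> (forall b, 0 <= x b <= M) ->
  expectpi p x + ln (\sum_(b < A) p b * expR (- x b))
    <= 5/3 * varpi p x + 3 * M ^+ 3 * ind01 R (M > 1/3).
Proof.
move=> p0 p1 xM.
set m := expectpi p x.
set S := \sum_(b < A) p b * expR (- x b).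
have Spos : 0 < S.
  apply: (@lt_le_trans _ _ (\sum_(b < A) p b * expR (- M))).
    by rewrite -mulr_suml p1 mul1r expR_gt0.
  apply: ler_sum => b _; apply: ler_wpM2l => //; rewrite ler_expR lerN2.
  by case/andP: (xM b).
have mM : m <= M.
  rewrite /m /expectpi; apply: (@le_trans _ _ (\sum_(b < A) p b * M)).
    by apply: ler_sum => b _; apply: ler_wpM2l => //; case/andP: (xM b).
  by rewrite -mulr_suml p1 mul1r.
have Vge0 : 0 <= varpi p x.
  by apply: sumr_ge0 => b _; apply: mulr_ge0 => //; exact: sqr_ge0.
have sp : \sum_(b < A) p b * (x b - m) = 0.
  under eq_bigr => b _ do rewrite mulrBr.
  by rewrite sumrB -mulr_suml p1 mul1r /m /expectpi subrr.
case: (lerP M (1/3)) => HM.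
- have key : m + ln S <= \sum_(b < A) p b * expR (- (x b - m)) - 1.
    have -> : m + ln S = ln (S * expR m).
      by rewrite lnM ?posrE ?expR_gt0 // expRK addrC.
    have -> : \sum_(b < A) p b * expR (- (x b - m)) = S * expR m.
      rewrite /S mulr_suml; apply: eq_bigr => b _.
      by rewrite -mulrA -expRD; congr (_ * expR _); ring.
    apply: ln_le_sub1; by rewrite mulr_gt0 ?expR_gt0.
  have le2 : \sum_(b < A) p b * expR (- (x b - m))
      <= \sum_(b < A) p b * (1 + (-1) * (x b - m) + 5/3 * (x b - m) ^+ 2).
    apply: ler_sum => b _; apply: ler_wpM2l => //.
    have : - (1/3) <= x b - m by case/andP: (xM b) => xb _; lra.
    move/expN_small; lra.
  rewrite sum_pi_affine p1 sp in le2.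
  rewrite /ind01.
  rewrite /varpi -/m; lra.
- have key : m + ln S <= m + S - 1 by have := ln_le_sub1 S Spos; lra.
  have le2 : m + S - 1 <= \sum_(b < A) p b * M ^+ 2.
    have -> : m + S - 1 = \sum_(b < A) p b * (x b + expR (- x b) - 1).
      rewrite /m /S /expectpi.
      under [RHS]eq_bigr => b _ do rewrite mulrBr mulrDr mulr1.
      by rewrite sumrB big_split /= p1.
    apply: ler_sum => b _; apply: ler_wpM2l => //.
    case/andP: (xM b) => xb0 xbM.
    have := expN_pos (x b) xb0; nra.
  rewrite -mulr_suml p1 mul1r in le2.
  rewrite /ind01.
  nra.
Qed.

Lemma sum_exp_gt0 (hA : (0 < A)%N) (f : 'I_A -> R) : 0 < \sum_(b < A) expR (f b).
Proof.
rewrite (bigD1 (Ordinal hA)) //=; apply: ltr_wpDr; last exact: expR_gt0.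
by apply: sumr_ge0 => b _; exact: expR_ge0.
Qed.

Lemma powmean (hA : (0 < A)%N) (c : 'I_A -> R) (mu lam : R) : 0 < mu -> mu <= lam ->
  ln ((\sum_(b < A) expR (- mu * c b)) / A%:R) / mu
    <= ln ((\sum_(b < A) expR (- lam * c b)) / A%:R) / lam.
Proof.
move=> mu0 ml.
have lam0 : 0 < lam by exact: lt_le_trans ml.
have A0 : 0 < A%:R :> R by rewrite ltr0n.
set Zl := \sum_(b < A) expR (- lam * c b).
set Zm := \sum_(b < A) expR (- mu * c b).
have Zl0 : 0 < Zl by exact: sum_exp_gt0.
have Zm0 : 0 < Zm by exact: sum_exp_gt0.
set s := ln (Zl / A%:R).
have es : expR s = Zl / A%:R by rewrite /s lnK // posrE divr_gt0.
set p := mu / lam.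
have p0 : 0 <= p by rewrite /p divr_ge0 // ltW.
have p1 : p <= 1 by rewrite /p ler_pdivrMr // mul1r.
have h1 : Zm <= \sum_(b < A) expR (p * s) * (p * expR (- lam * c b - s) + (1 - p)).
  apply: ler_sum => b _.
  have -> : - mu * c b = p * s + p * (- lam * c b - s).
    rewrite /p; field; exact: lt0r_neq0.
  rewrite expRD; apply: ler_wpM2l; first exact: expR_ge0.
  exact: expR_conv.
have h2 : \sum_(b < A) expR (p * s) * (p * expR (- lam * c b - s) + (1 - p))
    = expR (p * s) * A%:R.
  rewrite -mulr_sumr big_split /= -mulr_sumr sumr_const card_ord.
  have -> : \sum_(b < A) expR (- lam * c b - s) = Zl / expR s.
    by rewrite /Zl mulr_suml; apply: eq_bigr => b _; rewrite expRB.
  rewrite es; congr (_ * _).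
  rewrite -mulr_natr; field.
  by apply/andP; split; apply: lt0r_neq0.
rewrite h2 in h1.
have h3 : ln (Zm / A%:R) <= p * s.
  rewrite -[p * s]expRK ler_ln ?posrE ?divr_gt0 ?expR_gt0 //.
  by rewrite ler_pdivrMr.
rewrite ler_pdivrMr //.
apply: (le_trans h3); rewrite le_eqVlt; apply/orP; left; apply/eqP.
rewrite /p; field; exact: lt0r_neq0.
Qed.

Variable alpha : nat -> R.

Definition Tsum (g : nat -> R) (n : nat) :=
  \sum_(1 <= k < n.+1) wgt alpha k n * g k.

Lemma Tsum0 g : Tsum g 0 = 0.
Proof. by rewrite /Tsum big_geq. Qed.

Lemma Tsum_rec g n :
  Tsum g n.+1 = (1 - alpha n.+1) * Tsum g n + alpha n.+1 * g n.+1.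
Proof.
rewrite /Tsum big_nat_recr //=; congr (_ + _).
  rewrite mulr_sumr; apply: eq_big_nat => k /andP [k1 kn].
  rewrite /wgt big_nat_recr //=; ring.
by rewrite /wgt big_geq // mulr1.
Qed.

Lemma cumL_Tsum (loss : nat -> 'I_A -> R) n a :
  cumL alpha loss n a = Tsum (fun k => loss k a) n.
Proof.
elim: n => [|n IH]; first by rewrite Tsum0.
by rewrite Tsum_rec /= IH.
Qed.
End Aux.

Section Main.
Variable R : realType.
Variable A : nat.
Variable alpha eta : nat -> R.
Variable loss : nat -> 'I_A -> R.

Definition Psi (k : nat) : R :=
  ln ((\sum_(b < A) expR (- eta k.+1 * cumL alpha loss k b)) / A%:R) / eta k.+1.

Definition hterm (k : nat) : R :=
  5/3 * (etahat alpha eta k * alpha k * varpi (ftrl alpha eta loss k) (loss k))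
  + 3 * (etahat alpha eta k ^+ 2 * alpha k ^+ 2 * supnorm (loss k) ^+ 3
         * ind01 R (etahat alpha eta k * alpha k * supnorm (loss k) > 1/3)).

Lemma supnorm_ge (l : 'I_A -> R) b : 0 <= l b -> l b <= supnorm l.
Proof.
move=> h; rewrite /supnorm; apply: le_trans (le_bigmax _ (fun a => `|l a|) b).
by rewrite ger0_norm.
Qed.

Lemma var_scale (p l : 'I_A -> R) (c : R) :
  varpi p (fun b => c * l b) = c ^+ 2 * varpi p l.
Proof.
rewrite /varpi mulr_sumr; apply: eq_bigr => b _.
have -> : expectpi p (fun b => c * l b) = c * expectpi p l.
  by rewrite /expectpi mulr_sumr; apply: eq_bigr => a _; ring.
ring.
Qed.

Lemma decomp_lem (j : nat) b :
  (j = 0%N -> etahat alpha eta j.+1 = eta j.+2) ->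
  ((0 < j)%N -> alpha j.+1 < 1 /\ 0 < eta j.+1) ->
  - etahat alpha eta j.+1 * cumL alpha loss j.+1 b
    = - eta j.+1 * cumL alpha loss j b + - (etahat alpha eta j.+1 * alpha j.+1 * loss j.+1 b).
Proof.
case: j => [|j] hj0 hj1.
  by rewrite /= hj0 //; ring.
have [lt1 _] := hj1 (ltn0Sn _).
rewrite /etahat /=; field.
by rewrite subr_eq0 gt_eqF.
Qed.

Lemma step (hA : (0 < A)%N) (j : nat) :
  (forall k a, 0 <= loss k a) ->
  0 < alpha j.+1 -> alpha j.+1 <= 1 ->
  (j = 0%N -> etahat alpha eta j.+1 = eta j.+2) ->
  ((0 < j)%N -> alpha j.+1 < 1 /\ 0 < eta j.+1) ->
  0 < eta j.+2 -> eta j.+2 <= etahat alpha eta j.+1 ->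
  alpha j.+1 * expectpi (ftrl alpha eta loss j.+1) (loss j.+1) + Psi j.+1
    <= (1 - alpha j.+1) * Psi j + alpha j.+1 * hterm j.+1.
Proof.
move=> l0 a0 a1 hj0 hj1 en0 ene.
set k := j.+1.
set e := etahat alpha eta k.
set a := alpha k.
set p := ftrl alpha eta loss k.
set N := supnorm (loss k).
set x := fun b => e * a * loss k b.
set Z0 := \sum_(b < A) expR (- eta k * cumL alpha loss j b).
have e0 : 0 < e by exact: lt_le_trans ene.
have A0 : 0 < A%:R :> R by rewrite ltr0n.
have Z00 : 0 < Z0 by exact: sum_exp_gt0.
have pdef : forall b, p b = expR (- eta k * cumL alpha loss j b) / Z0 by [].
have p0 : forall b, 0 <= p b.
  by move=> b; rewrite pdef divr_ge0 // ?expR_ge0 // ltW.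
have p1 : \sum_(b < A) p b = 1.
  under eq_bigr => b _ do rewrite pdef.
  by rewrite -mulr_suml -/Z0 divff // lt0r_neq0.
have decomp : forall b, - e * cumL alpha loss k b
    = - eta k * cumL alpha loss j b + - x b.
  by move=> b; exact: decomp_lem.
set S := \sum_(b < A) p b * expR (- x b).
have Ze : \sum_(b < A) expR (- e * cumL alpha loss k b) = Z0 * S.
  rewrite /S mulr_sumr; apply: eq_bigr => b _.
  rewrite decomp expRD pdef; field; exact: lt0r_neq0.
have S0 : 0 < S.
  have : 0 < \sum_(b < A) expR (- e * cumL alpha loss k b) by exact: sum_exp_gt0.
  by rewrite Ze pmulr_rgt0.
have psi1 : Psi k <= ln ((\sum_(b < A) expR (- e * cumL alpha loss k b)) / A%:R) / e.
  exact: powmean.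
have split : ln ((\sum_(b < A) expR (- e * cumL alpha loss k b)) / A%:R) / e
    = ln (Z0 / A%:R) / e + ln S / e.
  rewrite Ze mulrAC (@lnM _ (Z0 / A%:R) S) ?posrE ?divr_gt0 //; ring.
have psi0 : ln (Z0 / A%:R) / e = (1 - a) * Psi j.
  rewrite /Psi -/Z0.
  have [j0|jpos] := eqVneq j 0%N.
    have -> : Z0 = A%:R.
      rewrite /Z0 j0 /= (eq_bigr (fun _ => 1)); last by move=> b _; rewrite mulr0 expR0.
      by rewrite sumr_const card_ord.
    by rewrite divff ?lt0r_neq0 // ln1 !mul0r mulr0.
  have [lt1 et0] : alpha j.+1 < 1 /\ 0 < eta j.+1 by apply: hj1; rewrite lt0n.
  rewrite /e /etahat /a /k eqSS (negbTE jpos); field.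
  by rewrite lt0r_neq0 // subr_eq0 gt_eqF.
have Epi : a * expectpi p (loss k) = expectpi p x / e.
  rewrite /expectpi /x mulr_sumr mulr_suml; apply: eq_bigr => b _.
  field; exact: lt0r_neq0.
have ea0 : 0 <= e * a by rewrite mulr_ge0 // ltW.
have xb : forall b, 0 <= x b <= e * a * N.
  move=> b; rewrite /x mulr_ge0 //=; apply: ler_wpM2l => //.
  exact: supnorm_ge.
have fb := @fbound R A p x (e * a * N) p0 p1 xb.
rewrite /x var_scale -/x in fb.
have fb' : (expectpi p x + ln S) / e <= a * hterm k.
  have -> : a * hterm k = (5 / 3 * ((e * a) ^+ 2 * varpi p (loss k))
      + 3 * (e * a * N) ^+ 3 * ind01 R (1 / 3 < e * a * N)) / e.
    rewrite /hterm -/e -/a -/p -/N; field; exact: lt0r_neq0.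
  by rewrite ler_pM2r // invr_gt0.
have : expectpi p x / e + ln S / e = (expectpi p x + ln S) / e by rewrite mulrDl.
lra.
Qed.

Lemma Psi0 (hA : (0 < A)%N) : Psi 0 = 0.
Proof.
rewrite /Psi /= (eq_bigr (fun _ => 1)); last by move=> b _; rewrite mulr0 expR0.
by rewrite sumr_const card_ord divff ?ln1 ?mul0r // pnatr_eq0 -lt0n.
Qed.

Section Hyps.
Variable hA : (0 < A)%N.
Variable Hl : forall k a, 0 <= loss k a.
Variable Ha1 : 0 < alpha 1%N.
Variable Ha1' : alpha 1%N <= 1.
Variable Hak : forall k, (2 <= k)%N -> 0 < alpha k /\ alpha k < 1.
Variable Hek : forall k, (2 <= k)%N -> 0 < eta k.+1 * (1 - alpha k) /\ eta k.+1 * (1 - alpha k) <= eta k.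

Lemma eta_pos j : 0 < eta j.+2.
Proof.
case: j => [|j].
  have [h1 h2] := Hek 2 isT.
  have [_ a2] := Hak 2 isT.
  apply: lt_le_trans h2; exact: h1.
have [h1 _] := Hek j.+2 isT.
have [_ a2] := Hak j.+2 isT.
by move: h1; rewrite pmulr_lgt0 // subr_gt0.
Qed.

Lemma step_all j :
  alpha j.+1 * expectpi (ftrl alpha eta loss j.+1) (loss j.+1) + Psi j.+1
    <= (1 - alpha j.+1) * Psi j + alpha j.+1 * hterm j.+1.
Proof.
apply: step => //.
- case: j => [//|j]; by have [] := Hak j.+2 isT.
- case: j => [//|j]; by have [_ /ltW] := Hak j.+2 isT.
- by move=> ->; rewrite /etahat eqxx.
- case: j => [//|j] _; split; first by have [] := Hak j.+2 isT.
  exact: eta_pos.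
- exact: eta_pos.
- case: j => [|j]; first by rewrite /etahat eqxx.
  have [h1 h2] := Hek j.+2 isT.
  have [_ a2] := Hak j.+2 isT.
  rewrite /etahat /= ler_pdivlMr // subr_gt0 //.
Qed.

Lemma alpha_le1 j : 0 <= 1 - alpha j.+1.
Proof.
rewrite subr_ge0; case: j => [//|j].
by have [_ /ltW] := Hak j.+2 isT.
Qed.

Lemma main_ind n :
  @Tsum R alpha (fun k => expectpi (ftrl alpha eta loss k) (loss k)) n + Psi n
    <= @Tsum R alpha hterm n.
Proof.
elim: n => [|n IH]; first by rewrite !Tsum0 Psi0 // addr0.
rewrite !Tsum_rec.
have h1 := step_all n.
have h2 := ler_wpM2l (alpha_le1 n) IH.
rewrite mulrDr in h2.
lra.
Qed.

Lemma lower_cum j a :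
  - cumL alpha loss j.+1 a <= Psi j.+1 + ln (A%:R) / eta j.+2.
Proof.
have e0 := eta_pos j.
have A0 : 0 < A%:R :> R by rewrite ltr0n.
set L := cumL alpha loss j.+1.
set Z := \sum_(b < A) expR (- eta j.+2 * L b).
have Z0 : 0 < Z by exact: sum_exp_gt0.
have hZ : expR (- eta j.+2 * L a) <= Z.
  rewrite /Z (bigD1 a) //= lerDl; apply: sumr_ge0 => b _; exact: expR_ge0.
have h1 : ln (expR (- eta j.+2 * L a) / A%:R) <= ln (Z / A%:R).
  rewrite ler_ln ?posrE ?divr_gt0 ?expR_gt0 //.
  by rewrite ler_pM2r // invr_gt0.
rewrite ln_div ?posrE ?expR_gt0 // expRK in h1.
have h2 : (- eta j.+2 * L a - ln A%:R) / eta j.+2 <= ln (Z / A%:R) / eta j.+2.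
  by rewrite ler_pM2r // invr_gt0.
have -> : Psi j.+1 = ln (Z / A%:R) / eta j.+2 by [].
have : (- eta j.+2 * L a - ln A%:R) / eta j.+2 = - L a - ln A%:R / eta j.+2.
  field; exact: lt0r_neq0.
lra.
Qed.

Lemma final_vs j a :
  regret_vs alpha eta loss j.+1 a <=
    5 / 3 * \sum_(1 <= k < j.+2) wgt alpha k j.+1 * etahat alpha eta k * alpha k
                                  * varpi (ftrl alpha eta loss k) (loss k)
    + ln (A%:R) / eta j.+2
    + 3 * \sum_(1 <= k < j.+2) wgt alpha k j.+1 * (etahat alpha eta k) ^+ 2 * (alpha k) ^+ 2
            * (supnorm (loss k)) ^+ 3
            * ind01 R (etahat alpha eta k * alpha k * supnorm (loss k) > 1 / 3).
Proof.
have h1 := main_ind j.+1.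
have h2 := lower_cum j a.
have e1 : regret_vs alpha eta loss j.+1 a
    = @Tsum R alpha (fun k => expectpi (ftrl alpha eta loss k) (loss k)) j.+1
      - cumL alpha loss j.+1 a.
  by rewrite cumL_Tsum.
have e2 : @Tsum R alpha hterm j.+1 =
    5 / 3 * \sum_(1 <= k < j.+2) wgt alpha k j.+1 * etahat alpha eta k * alpha k
                                  * varpi (ftrl alpha eta loss k) (loss k)
    + 3 * \sum_(1 <= k < j.+2) wgt alpha k j.+1 * (etahat alpha eta k) ^+ 2 * (alpha k) ^+ 2
            * (supnorm (loss k)) ^+ 3
            * ind01 R (etahat alpha eta k * alpha k * supnorm (loss k) > 1 / 3).
  rewrite /Tsum !mulr_sumr -big_split /=; apply: eq_bigr => k _.
  rewrite /hterm; ring.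
lra.
Qed.

End Hyps.
End Main.

Theorem theorem2 (R : realType) (A : nat) (hA : (0 < A)%N)
  (alpha eta : nat -> R) (loss : nat -> 'I_A -> R) :
  (forall k a, 0 <= loss k a) ->
  0 < alpha 1%N -> alpha 1%N <= 1 ->
  eta 1%N = eta 2 * (1 - alpha 1%N) ->
  (forall k, (2 <= k)%N -> 0 < alpha k /\ alpha k < 1) ->
  (forall k, (2 <= k)%N -> 0 < eta k.+1 * (1 - alpha k) /\ eta k.+1 * (1 - alpha k) <= eta k) ->
  forall n : nat, (1 <= n)%N ->
  regret alpha eta loss hA n <=
    5 / 3 * \sum_(1 <= k < n.+1) wgt alpha k n * etahat alpha eta k * alpha k
                                  * varpi (ftrl alpha eta loss k) (loss k)
    + ln (A%:R) / eta n.+1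
    + 3 * \sum_(1 <= k < n.+1) wgt alpha k n * (etahat alpha eta k) ^+ 2 * (alpha k) ^+ 2
            * (supnorm (loss k)) ^+ 3
            * ind01 R (etahat alpha eta k * alpha k * supnorm (loss k) > 1 / 3).
Proof.
move=> Hl Ha1 Ha1' He1 Hak Hek [//|j] _.
rewrite /regret; apply: bigmax_le => [|a _]; exact: final_vs.
Qed.
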